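(* Let $n,k,r$ be integers with $k,r\geq 2$ and $n\geq 2k$, and write $n=pk+q$ with integers $p,q$ and $1\leq q\leq k$. Let $H_U(n;k,r)$ be the $r$-uniform hypergraph whose vertex set is a disjoint union $A\cup B_1\cup\cdots\cup B_p$ with $|A|=k$, $|B_i|=k$ for $1\leq i\leq p-1$ and $|B_p|=q$, and whose edges are exactly the $r$-subsets $e$ of the vertex set such that either $e$ meets both $A$ and $B_1\cup\cdots\cup B_p$, or $e\subseteq B_i$ for some $i$ (i.e. $H_U(n;k,r)=((p-1)K_k^r\cup K_q^r)\vee_r (K_k^r)^c$). Then $H_U(n;k,r)$ is vertex-$k$-maximal, and $|E(H_U(n;k,r))|\leq \binom{n}{r}-\binom{n-k}{r}+\left(\frac{n}{k}-2\right)\binom{k}{r}$, with equality if $n$ is a multiple of $k$.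
   Context: Binomial coefficients satisfy $\binom{a}{b}=0$ when $b>a$. A hypergraph $H=(V,E)$ consists of a finite vertex set $V$ and a set $E$ of non-empty subsets of $V$ (edges); it is $r$-uniform if all edges have exactly $r$ elements. The complement $H^c$ has as edges the $r$-subsets of $V$ not in $E$. A subhypergraph is $H'=(V',E')$ with $V'\subseteq V$, $E'\subseteq E$. $H+e=(V,E\cup\{e\})$ for $e\in E(H^c)$. $H-Y$ is the hypergraph induced on $V\setminus Y$ (keeping edges contained in $V\setminus Y$). Connectedness is defined via paths (alternating sequences of distinct vertices and distinct edges with consecutive vertices in the intermediate edge). A vertex-cut is a set $X$ with $H-X$ disconnected. $\kappa(H)$ is the minimum size of a vertex-cut if one exists, and $|V(H)|-1$ otherwise. $\overline{\kappa}(H)=\max\{\kappa(H'): H'\subseteq H\}$. An $r$-uniform hypergraph $H$ is vertex-$k$-maximal if $\overline{\kappa}(H)\leq k$ but $\overline{\kappa}(H+e)\geq k+1$ for every $e\in E(H^c)$. *)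

(* Defs.v *)
From HB Require Import structures.
From mathcomp Require Import all_boot all_order all_algebra.
From Stdlib Require Import ClassicalEpsilon.
Set Implicit Arguments. Unset Strict Implicit. Unset Printing Implicit Defensive.

Section Hypergraphs.
Variable T : finType.

Record hgraph := HGraph { hV : {set T}; hE : {set {set T}} }.

Definition is_hypergraph (H : hgraph) : Prop :=
  forall e, e \in hE H -> e != set0 /\ e \subset hV H.

Definition uniform (r : nat) (H : hgraph) : Prop :=
  forall e, e \in hE H -> #|e| = r.

(* vs = [v0; ...; vm], es = [e1; ...; em]: alternating sequence
   v0 e1 v1 ... em vm of distinct vertices and distinct edges, with
   v_{i-1}, v_i in e_i. *)
Definition is_path (H : hgraph) (vs : seq T) (es : seq {set T}) : Prop :=
  [/\ size vs = (size es).+1, uniq vs /\ uniq es,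
      all (fun v => v \in hV H) vs, all (fun e => e \in hE H) es &
      all (fun t : T * T * {set T} => (t.1.1 \in t.2) && (t.1.2 \in t.2))
          (zip (zip vs (behead vs)) es)].

Definition joined (H : hgraph) (u v : T) : Prop :=
  exists vs es, is_path H (u :: vs) es /\ last u vs = v.

Definition connected (H : hgraph) : Prop :=
  forall u v, u \in hV H -> v \in hV H -> joined H u v.

Definition connectedb (H : hgraph) : bool :=
  if excluded_middle_informative (connected H) then true else false.

Definition hdel (H : hgraph) (Y : {set T}) : hgraph :=
  HGraph (hV H :\: Y) [set e in hE H | e \subset hV H :\: Y].

Definition is_vertex_cut (H : hgraph) (X : {set T}) : bool :=
  (X \subset hV H) && ~~ connectedb (hdel H X).

Definition kappa (H : hgraph) : nat :=
  if [exists X, is_vertex_cut H X]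
  then \big[minn/#|T|]_(X | is_vertex_cut H X) #|X|
  else #|hV H|.-1.

Definition subhyp (H' H : hgraph) : bool :=
  [&& hV H' \subset hV H, hE H' \subset hE H &
      [forall e in hE H', e \subset hV H']].

Definition kappabar (H : hgraph) : nat :=
  \max_(P : {set T} * {set {set T}} | subhyp (HGraph P.1 P.2) H)
     kappa (HGraph P.1 P.2).

Definition add_edge (H : hgraph) (e : {set T}) : hgraph :=
  HGraph (hV H) (e |: hE H).

Definition in_compl (r : nat) (H : hgraph) (e : {set T}) : bool :=
  [&& e \subset hV H, #|e| == r & e \notin hE H].

Definition vertex_k_maximal (r k : nat) (H : hgraph) : Prop :=
  [/\ is_hypergraph H, uniform r H, kappabar H <= k &
      forall e, in_compl r H e -> k.+1 <= kappabar (add_edge H e)].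

End Hypergraphs.

(* H_U(n;k,r) on vertex set 'I_n: A = {0..k-1},
   B_j (j = 1..p, indexed here by j' = j-1 : 'I_p) = {i >= k | (i-k) %/ k = j'},
   so |B_j| = k for j < p and |B_p| = n - pk = q when n = pk + q, 1 <= q <= k. *)
Definition HU_A (n k : nat) : {set 'I_n} := [set i : 'I_n | i < k].
Definition HU_B (n k p : nat) (j : 'I_p) : {set 'I_n} :=
  [set i : 'I_n | (k <= i) && ((i - k) %/ k == j)].

Definition HU (n k r p : nat) : hgraph 'I_n :=
  HGraph [set: 'I_n]
    [set e : {set 'I_n} | (#|e| == r) &&
       (((e :&: HU_A n k != set0) && (e :\: HU_A n k != set0))
        || [exists j : 'I_p, e \subset HU_B n k j])].

(* Main.v *)
Require Import Defs.
From HB Require Import structures.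
From mathcomp Require Import all_boot all_order all_algebra.
From Stdlib Require Import ClassicalEpsilon.
From mathcomp Require Import zify.
From mathcomp.algebra_tactics Require Import ring lra.
Set Implicit Arguments. Unset Strict Implicit. Unset Printing Implicit Defensive.

Section Gen.
Variable T : finType.
Implicit Types (H : hgraph T).

Lemma connectedbP H : connectedb H = true <-> connected H.
Proof. by rewrite /connectedb; case: excluded_middle_informative. Qed.

Lemma joined_refl H u : u \in hV H -> joined H u u.
Proof. by move=> uV; exists [::], [::]; split=> //; split; rewrite //= uV. Qed.

Lemma joined_edge H u v f : u \in hV H -> v \in hV H -> u != v ->
  f \in hE H -> u \in f -> v \in f -> joined H u v.
Proof.
move=> uV vV uv fE uf vf; exists [:: v], [:: f]; split=> //.
split=> //=; first by rewrite inE uv /=.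
- by rewrite uV vV.
- by rewrite fE.
- by rewrite uf vf.
Qed.

Lemma diam2_connected H :
  (forall u v, u \in hV H -> v \in hV H -> u != v ->
     (exists f, [/\ f \in hE H, u \in f & v \in f]) \/
     (exists w f1 f2, [/\ w \in hV H, w != u, w != v, f1 \in hE H &
        [/\ f2 \in hE H, u \in f1, w \in f1, w \in f2 & v \in f2]])) ->
  connected H.
Proof.
move=> hyp u v uV vV; have [<-|uv] := eqVneq u v; first exact: joined_refl.
case: (hyp u v uV vV uv) => [[f [fE uf vf]]|[w [f1 [f2 [wV wu wv f1E [f2E uf1 wf1 wf2 vf2]]]]]].
  exact: joined_edge fE uf vf.
have [ef|nef] := eqVneq f1 f2.
  by apply: (joined_edge uV vV uv f1E uf1); rewrite ef.
exists [:: w; v], [:: f1; f2]; split=> //; split=> //=.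
- by rewrite !inE !negb_or uv eq_sym wu /= wv nef.
- by rewrite uV wV vV.
- by rewrite f1E f2E.
- by rewrite uf1 wf1 wf2 vf2.
Qed.

Lemma path_inv (g : T -> nat) H u vs es : is_path H (u :: vs) es ->
  (forall f, f \in hE H -> {in f &, forall x y, g x = g y}) ->
  g (last u vs) = g u.
Proof.
case=> /= /eqP; rewrite eqSS => /eqP sz _ _ aE az hg.
elim: vs u es sz aE az => [|v vs IH] u [|f es] //= [sz] /andP[fE aE] /andP[/andP[uf vf] az].
by rewrite (IH v es sz aE az); apply: (hg f fE).
Qed.

Lemma bigmin_le (I : finType) (P : pred I) (F : I -> nat) x0 i0 :
  P i0 -> \big[minn/x0]_(i | P i) F i <= F i0.
Proof.
move=> Pi0; have : i0 \in index_enum I by rewrite mem_index_enum.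
elim: (index_enum I) => //= a r IH; rewrite inE big_cons => /predU1P[<-|ir].
  by rewrite Pi0 geq_minl.
by case: ifP => _; [apply: leq_trans (geq_minr _ _) (IH ir)|apply: IH].
Qed.

Lemma kappa_le_cut H X : is_vertex_cut H X -> kappa H <= #|X|.
Proof.
move=> cX; rewrite /kappa; have -> : [exists X, is_vertex_cut H X] by apply/existsP; exists X.
exact: bigmin_le.
Qed.

Lemma cut_proper H X : is_vertex_cut H X -> #|X| < #|hV H|.
Proof.
case/andP=> sXV nc; rewrite ltnNge; apply/negP=> le.
have eX : X = hV H by apply/eqP; rewrite eqEcard sXV le.
move/negP: nc; apply; apply/connectedbP => u v; rewrite /= eX setDv inE //.
Qed.

Lemma kappa_le_V H : kappa H <= #|hV H|.-1.
Proof.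
rewrite /kappa; case: existsP => [[X cX]|_] //.
apply: leq_trans (bigmin_le _ _ cX) _.
by rewrite -ltnS; apply: leq_trans (cut_proper cX) _; apply: leqSpred.
Qed.

Lemma kappa_ge H k : k.+2 <= #|hV H| ->
  (forall X : {set T}, X \subset hV H -> #|X| <= k -> connected (hdel H X)) ->
  k < kappa H.
Proof.
move=> szV hyp; rewrite /kappa; case: existsP => [_|_]; last first.
  by rewrite -ltnS (ltn_predK szV).
apply: (big_ind (fun x => k < x)).
- by apply: leq_trans (ltnW szV) (max_card _).
- by move=> x y; rewrite leq_min => -> ->.
move=> X /andP[sXV nc]; rewrite ltnNge; apply/negP=> le.
by move/negP: nc; apply; apply/connectedbP; apply: hyp.
Qed.

Lemma kappabar_le H k :
  (forall V' E', subhyp (HGraph V' E') H -> kappa (HGraph V' E') <= k) ->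
  kappabar H <= k.
Proof. by move=> hyp; apply/bigmax_leqP => [[V' E']] /= sub; apply: hyp. Qed.

Lemma kappabar_ge H V' E' : subhyp (HGraph V' E') H ->
  kappa (HGraph V' E') <= kappabar H.
Proof. by move=> sub; apply: (@leq_bigmax_cond _ _ (fun P : {set T} * {set {set T}} => kappa (HGraph P.1 P.2)) (V', E')). Qed.

End Gen.

Lemma card_interval n a c : a <= c <= n ->
  #|[set i : 'I_n | a <= i < c]| = c - a.
Proof.
case/andP=> ac cn; set P := fun i => a <= i < c; have hP : forall i, P i = (a <= i < c) by [].
rewrite (_ : [set i : 'I_n | a <= i < c] = [set i : 'I_n | P i]) //.
rewrite -sum1_card big_mkcond /=.
rewrite (eq_bigr (fun i : 'I_n => if P i then 1 else 0)); last by move=> i _; rewrite inE.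
rewrite -(big_mkord xpredT (fun i => if P i then 1 else 0)).
rewrite (big_cat_nat (leq0n a) (leq_trans ac cn)) /=.
rewrite (big_cat_nat ac cn) /=.
rewrite big1_seq => [|i /andP[_]]; last first.
  rewrite mem_iota subn0 add0n hP => /andP[_ ia]; by rewrite leqNgt ia.
rewrite (big1_seq (index_iota c n)) => [|i /andP[_]]; last first.
  rewrite mem_iota subnKC // hP => /andP[ci _]; by rewrite ltnNge ci andbF.
rewrite add0n addn0 (eq_big_seq (fun=> 1)) => [|i]; last first.
  by rewrite mem_iota subnKC // hP => ->.
by rewrite sum_nat_const_nat muln1.
Qed.

Lemma exists_rsub (T : finType) (W : {set T}) r u v :
  2 <= r -> r <= #|W| -> u \in W -> v \in W ->
  exists f : {set T}, [/\ f \subset W, #|f| = r, u \in f & v \in f].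
Proof.
move=> r2 rW uW vW.
set S := W :\: [set u; v].
have c2 : #|[set u; v]| <= 2 by rewrite cardsU1 cards1; case: (u \in _).
have sUV : [set u; v] \subset W by apply/subsetP=> x; rewrite !inE => /orP[]/eqP->.
have cS : #|S| = #|W| - #|[set u; v]|.
  by rewrite cardsD (setIidPr sUV).
have : 0 < #|[set A : {set T} | A \subset S & #|A| == r - #|[set u; v]|]|.
  by rewrite cards_draws bin_gt0 cS leq_sub2r.
case/card_gt0P=> S' /[!inE] /andP[sS' /eqP cS'].
exists ([set u; v] :|: S'); split.
- rewrite subUset sUV /=; apply: subset_trans sS' _; exact: subsetDl.
- rewrite cardsU cS'.
  have -> : [set u; v] :&: S' = set0.
    apply/setP=> x; rewrite !inE; apply/negbTE; apply/negP=> /andP[xuv xS'].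
    by move: (subsetP sS' x xS'); rewrite !inE xuv.
  by rewrite cards0 subn0 subnKC // (leq_trans c2).
- by rewrite !inE eqxx.
- by rewrite !inE eqxx orbT.
Qed.

Lemma card_sum (I : finType) (P : pred I) : #|[set x | P x]| = \sum_x (P x : nat).
Proof. rewrite -sum1_card big_mkcond; apply: eq_bigr => x _; rewrite inE; by case: (P x). Qed.

Lemma sum_excl (I : finType) (P : pred I) : (forall i j, P i -> P j -> i = j) ->
  \sum_i (P i : nat) = [exists i, P i].
Proof.
move=> uP; case: existsP => [[i Pi]|nP].
  rewrite (bigD1 i) //= Pi big1 // => j ji; case Pj: (P j) => //.
  by move/eqP: ji; case; apply: uP.
by rewrite big1 // => j _; case Pj: (P j) => //; case: nP; exists j.
Qed.

Lemma bin_ratio k q r : q <= k -> 0 < r -> k * 'C(q, r) <= q * 'C(k, r).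
Proof.
move=> qk; case: r => // r _.
rewrite -(leq_pmul2l (ltn0Sn r)) !mulnA ![r.+1 * _]mulnC -!mulnA -!mul_bin_diag.
rewrite mulnCA leq_mul2l; apply/orP; right; rewrite leq_mul2l; apply/orP; right.
by apply: leq_bin2l; rewrite -!subn1 leq_sub2r.
Qed.


Section HUsec.
Variables n k r p q : nat.
Hypotheses (k2 : 2 <= k) (r2 : 2 <= r) (nk : 2 * k <= n) (npq : n = p * k + q)
  (q1 : 1 <= q) (qk : q <= k).

Local Notation A := (HU_A n k).
Local Notation B := (@HU_B n k p).
Local Notation HH := (HU n k r p).
Definition blk (i : nat) := (i - k) %/ k.
Definition blkset (j : nat) : {set 'I_n} := [set i : 'I_n | (k <= i) && (blk i == j)].

Lemma kpos : 0 < k. Proof. by apply: leq_trans k2. Qed.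

Lemma ppos : 0 < p.
Proof. move: nk qk k2; rewrite npq; case: p => [|//]; lia. Qed.

Lemma inA (i : 'I_n) : (i \in A) = (i < k). Proof. by rewrite inE. Qed.
Lemma inB (j : 'I_p) (i : 'I_n) : (i \in B j) = (k <= i) && (blk i == j). Proof. by rewrite inE. Qed.
Lemma B_blkset (j : 'I_p) : B j = blkset j. Proof. by apply/setP=> i; rewrite !inE. Qed.

Lemma blk_iff (i j : nat) : (k <= i) && (blk i == j) = (j.+1 * k <= i < j.+2 * k).
Proof.
have kp := kpos.
rewrite /blk eqn_leq leq_divRL // -[(_ - _) %/ k <= j]ltnS ltn_divLR //.
apply/idP/idP.
- case/and3P=> ki h1 h2; apply/andP; split; nia.
- case/andP=> h1 h2; apply/and3P; split; nia.
Qed.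

Lemma blk_lt (i : 'I_n) : k <= i -> blk i < p.
Proof. move=> ki; have kp := kpos; rewrite /blk ltn_divLR //; have := ltn_ord i; nia. Qed.

Lemma card_blkset j : j.+1 * k <= n -> #|blkset j| = minn (j.+2 * k) n - j.+1 * k.
Proof.
move=> jn; rewrite -(@card_interval n); last by rewrite geq_minr andbT leq_min jn leq_mul2r leqnSn orbT.
apply: eq_card => i; rewrite !inE blk_iff leq_min (ltn_ord i) andbT //.
Qed.

Lemma card_blkset_le j : #|blkset j| <= k.
Proof.
case: (leqP (j.+1 * k) n) => jn; first by rewrite card_blkset //; lia.
apply: (@leq_trans 0) => //; rewrite leqn0 cards_eq0; apply/eqP/setP=> i.
rewrite !inE blk_iff; apply/negbTE/negP=> /andP[h _]; have := ltn_ord i; lia.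
Qed.

Lemma cardA : #|A| = k.
Proof.
have h := @card_interval n 0 k; rewrite subn0 in h; apply: etrans (h _); last by rewrite leq0n /=; lia.
by apply: eq_card => i; rewrite !inE.
Qed.


Lemma HU_edgeE f : (f \in hE HH) =
  (#|f| == r) && (((f :&: A != set0) && (f :\: A != set0)) || [exists j : 'I_p, f \subset B j]).
Proof. by rewrite /= inE. Qed.

Lemma edge_notA f : f \in hE HH -> f \subset ~: A -> exists j : 'I_p, f \subset B j.
Proof.
rewrite HU_edgeE => /andP[_ /orP[/andP[fA _]|/existsP//]] sfA.
case/set0Pn: fA => x; rewrite inE => /andP[xf xA].
by move: (subsetP sfA x xf); rewrite inE xA.
Qed.

Lemma edge_A f : f \in hE HH -> f \subset A -> False.
Proof.
rewrite HU_edgeE => /andP[/eqP cf /orP[/andP[_ fA]|/existsP[j fB]]] sfA.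
  by case/set0Pn: fA => x; rewrite inE => /andP[xA xf]; rewrite (subsetP sfA x xf) in xA.
have : f != set0 by rewrite -card_gt0 cf; apply: leq_trans r2.
case/set0Pn=> x xf; move: (subsetP sfA x xf) (subsetP fB x xf); rewrite inA inB.
by move=> xk /andP[kx _]; move: (leq_trans xk kx); rewrite ltnn.
Qed.

Lemma blk_const f : f \in hE HH -> f \subset ~: A -> {in f &, forall x y : 'I_n, blk x = blk y}.
Proof.
move=> fE fA; case: (edge_notA fE fA) => j fB x y xf yf.
move: (subsetP fB x xf) (subsetP fB y yf); rewrite !inB => /andP[_ /eqP->] /andP[_ /eqP->] //.
Qed.

Lemma HU_kappabar_le : kappabar HH <= k.
Proof.
apply: kappabar_le => V' E' /and3P[_ sE /forall_inP sEV].
case: (boolP [exists u : 'I_n, exists v : 'I_n,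
          [&& u \in V', v \in V', k <= u, k <= v & blk u != blk v]]).
  case/existsP=> u /existsP[v /and5P[uV vV ku kv buv]].
  apply: leq_trans (kappa_le_cut (X := V' :&: A) _) _; last first.
    by apply: leq_trans (subset_leq_card (subsetIr _ _)) _; rewrite cardA.
  rewrite /is_vertex_cut subsetIl /=; apply/negP=> /connectedbP conn.
  have uW : u \in hV (hdel (HGraph V' E') (V' :&: A)) by rewrite /= !inE uV /= -leqNgt ku.
  have vW : v \in hV (hdel (HGraph V' E') (V' :&: A)) by rewrite /= !inE vV /= -leqNgt kv.
  have [vs [es [pth lst]]] := conn u v uW vW.
  have := path_inv (g := fun x : 'I_n => blk x) pth; rewrite lst => eq.
  suff : blk v = blk u by move=> e; move/negP: buv; apply; rewrite e.
  apply: eq => f; rewrite /= inE => /andP[fE' fsub]; apply: blk_const; first exact: (subsetP sE).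
  apply: subset_trans fsub _; apply/subsetP=> x; rewrite !inE; by case: (x \in V'); case: (x < k).
move=> nex.
have hsame : forall u v, u \in V' -> v \in V' -> k <= u -> k <= v -> blk u = blk v.
  move=> u v uV vV ku kv; apply/eqP/negPn/negP => buv; move/negP: nex; apply.
  by apply/existsP; exists u; apply/existsP; exists v; rewrite uV vV ku kv.
have cX : #|V' :\: A| <= k.
  case: (set_0Vmem (V' :\: A)) => [->|[x0]]; first by rewrite cards0.
  rewrite inE inA -leqNgt => /andP[kx0 x0V].
  apply: leq_trans _ (card_blkset_le (blk x0)); apply: subset_leq_card; apply/subsetP=> x.
  rewrite !inE -leqNgt => /andP[kx xV]; by rewrite kx (hsame x x0) // eqxx.
case: (leqP #|V' :&: A| 1) => cA.
  apply: leq_trans (kappa_le_V _) _ => /=; rewrite -(cardsID A V'); lia.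
apply: leq_trans (kappa_le_cut (X := V' :\: A) _) cX.
rewrite /is_vertex_cut subsetDl /=; apply/negP=> /connectedbP conn.
case/card_gt1P: cA => u [v [uVA vVA uv]].
have uW : u \in hV (hdel (HGraph V' E') (V' :\: A)).
  by move: uVA; rewrite /= !inE => /andP[-> ->].
have vW : v \in hV (hdel (HGraph V' E') (V' :\: A)).
  by move: vVA; rewrite /= !inE => /andP[-> ->].
have [vs [es [pth lst]]] := conn u v uW vW.
have := path_inv (g := fun x : 'I_n => val x) pth; rewrite lst => eq.
suff : val v = val u by move=> e; move/negP: uv; apply; apply/eqP/val_inj.
apply: eq => f; rewrite /= inE => /andP[fE' fsub]; exfalso; apply: (edge_A (subsetP sE f fE')).
apply: subset_trans fsub _; apply/subsetP=> x; rewrite !inE; by case: (x \in V'); case: (x < k).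
Qed.

Definition Hp (e V' : {set 'I_n}) : hgraph 'I_n :=
  HGraph V' [set f in e |: hE HH | f \subset V'].

Lemma edge_hdel (e V' X f : {set 'I_n}) : f \subset V' :\: X -> (f == e) || (f \in hE HH) ->
  f \in hE (hdel (Hp e V') X).
Proof.
move=> fW fE; rewrite /= !inE -HU_edgeE fE fW andbT /=.
by apply: subset_trans fW (subsetDl _ _).
Qed.

Lemma blk_edge j (f : {set 'I_n}) : j < p -> f \subset blkset j -> #|f| = r -> f \in hE HH.
Proof.
move=> jp fS cf; rewrite HU_edgeE cf eqxx /=; apply/orP; right.
by apply/existsP; exists (Ordinal jp); rewrite B_blkset.
Qed.

Lemma mixed_edge (f : {set 'I_n}) (x y : 'I_n) : #|f| = r -> x \in f -> y \in f -> x \in A -> y \notin A ->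
  f \in hE HH.
Proof.
move=> cf xf yf xA yA; rewrite HU_edgeE cf eqxx /=; apply/orP; left.
rewrite inA in xA; rewrite inA in yA.
apply/andP; split; apply/set0Pn; [exists x|exists y]; by rewrite !inE ?xf ?yf ?xA ?yA.
Qed.

Lemma conn_mixed (e V' X : {set 'I_n}) (a b : 'I_n) : a \in V' :\: X -> b \in V' :\: X -> a \in A -> b \notin A ->
  r <= #|V' :\: X| -> connected (hdel (Hp e V') X).
Proof.
move=> aW bW aA bA rW; apply: diam2_connected => u v /= uW vW uv.
have mk x y : x \in V' :\: X -> y \in V' :\: X -> x \in A -> y \notin A ->
   exists f, [/\ f \in hE (hdel (Hp e V') X), x \in f & y \in f].
  move=> xW yW xA yA; have [f [fW cf xf yf]] := exists_rsub r2 rW xW yW.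
  exists f; split=> //; apply: edge_hdel fW _; rewrite (mixed_edge cf xf yf xA yA) orbT //.
have mk' x y : x \in V' :\: X -> y \in V' :\: X -> x \notin A -> y \in A ->
   exists f, [/\ f \in hE (hdel (Hp e V') X), x \in f & y \in f].
  move=> xW yW xA yA; have [f [fE yf xf]] := mk y x yW xW yA xA; by exists f.
case uA: (u \in A); case vA: (v \in A).
- right; have [f1 [f1E uf1 bf1]] := mk u b uW bW uA bA.
  have [f2 [f2E bf2 vf2]] := mk' b v bW vW bA vA.
  exists b, f1, f2; split=> //; apply/eqP=> eb; [by rewrite -eb (negbTE bA) in uA|by rewrite -eb (negbTE bA) in vA].
- by left; apply: mk=> //; rewrite vA.
- by left; apply: mk'=> //; rewrite uA.
- right; have [f1 [f1E uf1 af1]] := mk' u a uW aW (negbT uA) aA.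
  have [f2 [f2E af2 vf2]] := mk a v aW vW aA (negbT vA).
  exists a, f1, f2; split=> //; apply/eqP=> ea; [by rewrite -ea aA in uA|by rewrite -ea aA in vA].
Qed.

Lemma conn_block (e V' X : {set 'I_n}) j : j < p -> V' :\: X \subset blkset j -> r <= #|V' :\: X| ->
  connected (hdel (Hp e V') X).
Proof.
move=> jp WS rW; apply: diam2_connected => u v /= uW vW uv; left.
have [f [fW cf uf vf]] := exists_rsub r2 rW uW vW.
have fE := blk_edge jp (subset_trans fW WS) cf.
exists f; split=> //; apply: edge_hdel fW _; by rewrite fE orbT.
Qed.

Lemma conn_e (e V' X : {set 'I_n}) : V' :\: X = e -> connected (hdel (Hp e V') X).
Proof.
move=> We; apply: diam2_connected => u v /= uW vW uv; left.
by exists e; split; rewrite -?We //; apply: edge_hdel; rewrite ?We ?eqxx.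
Qed.

Lemma conn_eS (e V' X : {set 'I_n}) j (w0 : 'I_n) : j < p -> V' :\: X = e :|: blkset j -> w0 \in e ->
  w0 \in blkset j -> r <= #|blkset j| -> connected (hdel (Hp e V') X).
Proof.
move=> jp WeS w0e w0S rS.
have Sed (f : {set 'I_n}) : f \subset blkset j -> #|f| = r -> f \in hE (hdel (Hp e V') X).
  move=> fS cf; apply: edge_hdel; first by rewrite WeS; apply: subset_trans fS (subsetUr _ _).
  by rewrite (blk_edge jp fS cf) orbT.
have eed : e \in hE (hdel (Hp e V') X) by apply: edge_hdel; rewrite ?WeS ?subsetUl ?eqxx.
apply: diam2_connected => u v uW vW uv.
have {uW} uW : (u \in e) || (u \in blkset j) by rewrite -in_setU -WeS.
have {vW} vW : (v \in e) || (v \in blkset j) by rewrite -in_setU -WeS.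
case uS: (u \in blkset j); case vS: (v \in blkset j).
- left; have [f [fW cf uf vf]] := exists_rsub r2 rS uS vS; exists f; split=> //; exact: Sed.
- have ve : v \in e by move: vW; rewrite vS orbF.
  case ue: (u \in e); first by left; exists e.
  right; have [f [fW cf uf wf]] := exists_rsub r2 rS uS w0S.
  exists w0, f, e; split=> //; first by rewrite /= WeS inE w0e.
  + by apply/eqP=> ew; rewrite -ew w0e in ue.
  + by apply/eqP=> ew; rewrite -ew w0S in vS.
  + exact: Sed.
- have ue : u \in e by move: uW; rewrite uS orbF.
  case ve: (v \in e); first by left; exists e.
  right; have [f [fW cf wf vf]] := exists_rsub r2 rS w0S vS.
  exists w0, e, f; split=> //; first by rewrite /= WeS inE w0e.
  + by apply/eqP=> ew; rewrite -ew w0S in uS.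
  + by apply/eqP=> ew; rewrite -ew w0e in ve.
  + by split=> //; apply: Sed.
- left; exists e; split=> //.
  + by move: uW; rewrite uS orbF.
  + by move: vW; rewrite vS orbF.
Qed.

Lemma card_blkset_k j : j.+2 * k <= n -> #|blkset j| = k.
Proof.
move=> h; rewrite card_blkset; last by apply: leq_trans h; rewrite leq_mul2r leqnSn orbT.
rewrite (minn_idPl h) !mulSn; lia.
Qed.

Lemma subhyp_Hp e V' : subhyp (Hp e V') (add_edge HH e).
Proof.
apply/and3P; split; first exact: subsetT.
  by apply/subsetP=> f; rewrite /= inE => /andP[].
by apply/forall_inP=> f; rewrite /= inE => /andP[].
Qed.

Lemma cardW (V' X : {set 'I_n}) : X \subset V' -> #|V' :\: X| = #|V'| - #|X|.
Proof. by move=> sXV; rewrite cardsD (setIidPr sXV). Qed.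

Lemma disj_card (S1 S2 : {set 'I_n}) : [disjoint S1 & S2] -> #|S1 :|: S2| = #|S1| + #|S2|.
Proof. by move=> d; rewrite cardsU (disjoint_setI0 d) cards0 subn0. Qed.

Lemma HU_lower e : in_compl r HH e -> k < kappabar (add_edge HH e).
Proof.
case/and3P=> _ /eqP ce eE.
have [x0 x0e] : exists x0, x0 \in e.
  by apply/set0Pn; rewrite -card_gt0 ce; apply: leq_trans r2.
move: eE; rewrite HU_edgeE ce eqxx /= negb_or => /andP[eAB neB].
rewrite negb_and !negbK in eAB.
case/orP: eAB => [/eqP eA0|/eqP eA].
-
  have eCA : e \subset ~: A.
    apply/subsetP=> x xe; rewrite inE; apply/negP=> xA.
    have : x \in e :&: A by rewrite inE xe xA.
    by rewrite eA0 inE.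
  have eK x : x \in e -> k <= x by move=> xe; move: (subsetP eCA x xe); rewrite !inE -leqNgt.
  have kx0 := eK x0 x0e.
  have [y ye yS] : exists2 y, y \in e & y \notin blkset (blk x0).
    apply/exists_inP; rewrite -negb_forall_in; apply/negP=> /forall_inP hall.
    apply: (negP neB); apply/existsP; exists (Ordinal (blk_lt kx0)).
    by rewrite B_blkset; apply/subsetP=> z ze; apply: hall.
  have ky := eK y ye.
  have byx : blk y != blk x0 by move: yS; rewrite inE ky.
  have dAS j : [disjoint A & e :|: blkset j].
    rewrite -setI_eq0; apply/eqP/setP=> z; rewrite !inE; apply/negbTE/negP=> /andP[zA /orP[ze|/andP[kz _]]].
      by move: (eK z ze); rewrite leqNgt zA.
    by move: kz; rewrite leqNgt zA.
  case: (leqP r k) => [rk|kr]; last first.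
    pose V' := A :|: e.
    apply: leq_trans (kappabar_ge (subhyp_Hp e V')).
    have dj : [disjoint A & e].
      rewrite -setI_eq0; apply/eqP/setP=> z; rewrite !inE; apply/negbTE/negP=> /andP[zA ze].
      by move: (eK z ze); rewrite leqNgt zA.
    have cV : #|V'| = k + r by rewrite disj_card // ce cardA.
    apply: kappa_ge => [/=|X /= sXV cX]; first by rewrite cV; lia.
    have cW : r <= #|V' :\: X|.
      rewrite cardW // cV addnC -addnBA //; exact: leq_addr.
    case: (boolP [exists a in V' :\: X, a \in A]) => [/exists_inP[a aW aA]|noa].
      case: (boolP [exists b in V' :\: X, b \notin A]) => [/exists_inP[b bW bA]|nob].
        exact: conn_mixed aW bW aA bA cW.
      have : #|V' :\: X| <= #|A|.
        apply: subset_leq_card; apply/subsetP=> z zW; apply/negPn/negP=> zA.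
        by move/negP: nob; apply; apply/exists_inP; exists z.
      rewrite cardA; lia.
    apply: conn_e; apply/eqP; rewrite eqEcard ce cW andbT.
    apply/subsetP=> z zW; move: (zW); rewrite inE => /andP[_]; rewrite inE => /orP[zA|//].
    by move/negP: noa; case; apply/exists_inP; exists z.
  have [j [w0 [z [jp w0e w0S ze zS]]]] : exists j w0 z,
      [/\ j.+1 < p, w0 \in e, w0 \in blkset j, z \in e & z \notin blkset j].
    case: (ltnP (blk x0).+1 p) => h.
      by exists (blk x0), x0, y; split=> //; rewrite inE kx0 eqxx.
    exists (blk y), y, x0; split=> //.
    - have := blk_lt ky; have := blk_lt kx0; move: byx h; lia.
    - by rewrite inE ky eqxx.
    - by rewrite inE kx0 eq_sym.
  set S := blkset j.
  have cS : #|S| = k.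
    apply: card_blkset_k; rewrite npq; apply: leq_trans (leq_addr q _); rewrite leq_mul2r jp orbT //.
  have ceS : k < #|e :|: S|.
    rewrite -cS; have : #|z |: S| <= #|e :|: S|.
      apply: subset_leq_card; apply/subsetP=> t; rewrite !inE => /orP[/eqP->|->]; by rewrite ?ze ?orbT.
    by rewrite cardsU1 zS.
  pose V' := A :|: (e :|: S).
  apply: leq_trans (kappabar_ge (subhyp_Hp e V')).
  have cV : #|V'| = k + #|e :|: S| by rewrite (disj_card (dAS j)) cardA.
  apply: kappa_ge => [/=|X /= sXV cX]; first by rewrite cV; lia.
  have cW : k < #|V' :\: X|.
    rewrite (cardW sXV) cV -addnBA; last exact: leq_trans cX (ltnW ceS).
    by rewrite -[k in k < _]addn0 ltn_add2l subn_gt0; exact: leq_ltn_trans cX ceS.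
  case: (boolP [exists a in V' :\: X, a \in A]) => [/exists_inP[a aW aA]|noa].
    case: (boolP [exists b in V' :\: X, b \notin A]) => [/exists_inP[b bW bA]|nob].
      have rW : r <= #|V' :\: X| by apply: leq_trans rk (ltnW cW).
      exact: conn_mixed aW bW aA bA rW.
    have : #|V' :\: X| <= #|A|.
      apply: subset_leq_card; apply/subsetP=> t tW; apply/negPn/negP=> tA.
      by move/negP: nob; apply; apply/exists_inP; exists t.
    rewrite cardA => h; move: (leq_trans cW h); by rewrite ltnn.
  have AX : A \subset X.
    apply/subsetP=> t tA; apply/negPn/negP=> tX; move/negP: noa; apply; apply/exists_inP; exists t => //.
    by rewrite in_setD tX /V' in_setU tA.
  have XA : X = A by apply/esym/eqP; rewrite eqEcard AX cardA.
  apply: (conn_eS (j := j) (w0 := w0)) => //; first by apply: ltnW.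
    rewrite XA /V' setDUl setDv set0U; apply/setDidPl.
    by rewrite disjoint_sym (dAS j).
  by rewrite cS.
-
  have eSA : e \subset A by rewrite -setD_eq0 eA.
  pose V' := e :|: blkset 0.
  apply: leq_trans (kappabar_ge (subhyp_Hp e V')).
  have dj : [disjoint e & blkset 0].
    rewrite -setI_eq0; apply/eqP/setP=> x; rewrite !inE; apply/negbTE/negP=> /andP[xe /andP[kx _]].
    by move: (subsetP eSA x xe); rewrite inA ltnNge kx.
  have cB : #|blkset 0| = k by apply: card_blkset_k; rewrite mul2n -addnn; lia.
  have cV : #|V'| = r + k by rewrite disj_card // ce cB.
  apply: kappa_ge => [/=|X /= sXV cX]; first by rewrite cV; lia.
  have cW : r <= #|V' :\: X| by rewrite cardW // cV -addnBA // leq_addr.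
  case: (boolP [exists a in V' :\: X, a \in A]) => [/exists_inP[a aW aA]|noa].
    case: (boolP [exists b in V' :\: X, b \notin A]) => [/exists_inP[b bW bA]|nob].
      exact: conn_mixed aW bW aA bA cW.
    apply: conn_e; apply/eqP; rewrite eqEcard ce cW andbT.
    apply/subsetP=> x xW; move: (xW); rewrite inE => /andP[_]; rewrite inE => /orP[//|xB].
    move/negP: nob; case; apply/exists_inP; exists x => //.
    by move: xB; rewrite inE inA -leqNgt => /andP[].
  apply: (conn_block (j := 0)) cW => //; first exact: ppos.
  apply/subsetP=> x xW; move: (xW); rewrite inE => /andP[_]; rewrite inE => /orP[xe|//].
  move/negP: noa; case; apply/exists_inP; exists x => //; exact: (subsetP eSA).
Qed.

Lemma HU_hyper : is_hypergraph HH.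
Proof.
move=> f; rewrite HU_edgeE => /andP[/eqP cf _]; split; last exact: subsetT.
by rewrite -card_gt0 cf; apply: leq_trans r2.
Qed.

Lemma HU_unif : uniform r HH.
Proof. by move=> f; rewrite HU_edgeE => /andP[/eqP]. Qed.

Lemma cardBj (j : 'I_p) : #|B j| = if j.+1 < p then k else q.
Proof.
have kp := kpos.
rewrite B_blkset card_blkset; last first.
  rewrite npq; apply: leq_trans (leq_addr q _); rewrite leq_mul2r (ltn_ord j) orbT //.
case: ifP => h.
  have h2 : j.+2 * k <= n by rewrite npq; apply: leq_trans (leq_addr q _); rewrite leq_mul2r h orbT.
  rewrite (minn_idPl h2) !mulSn; lia.
have jp : j.+1 = p by apply/eqP; rewrite eqn_leq (ltn_ord j) leqNgt h.
rewrite jp (minn_idPr _); first by rewrite npq addKn.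
by rewrite npq mulSn addnC leq_add2r.
Qed.

Lemma HU_count : #|hE HH| + 'C(k, r) + 'C(n - k, r) = 'C(n, r) + p.-1 * 'C(k, r) + 'C(q, r).
Proof.
have r0 : 0 < r by apply: leq_trans r2.
pose mix (f : {set 'I_n}) := (#|f| == r) && ((f :&: A != set0) && (f :\: A != set0)).
pose inb (j : 'I_p) (f : {set 'I_n}) := (f \subset B j) && (#|f| == r).
have nz (f : {set 'I_n}) : #|f| == r -> f != set0 by move/eqP=> cf; rewrite -card_gt0 cf.
have hE1 : #|hE HH| = \sum_f (mix f : nat) + \sum_(j : 'I_p) \sum_f (inb j f : nat).
  rewrite exchange_big /= -big_split /= card_sum; apply: eq_bigr => f _.
  rewrite (@sum_excl _ (inb ^~ f)); last first.
    move=> i j /andP[fi cf] /andP[fj _]; case/set0Pn: (nz f cf) => x xf.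
    move: (subsetP fi x xf) (subsetP fj x xf); rewrite !inB => /andP[_ /eqP xi] /andP[_ /eqP xj].
    by apply: val_inj; rewrite /= -xi -xj.
  rewrite /mix; case cf: (#|f| == r) => /=; last first.
    have -> : [exists i, inb i f] = false by apply/negbTE/existsP => [[j /andP[_]]]; rewrite cf.
    by [].
  case mx: ((f :&: A != set0) && (f :\: A != set0)) => /=.
    have -> : [exists i, inb i f] = false.
      apply/negbTE/existsP=> [[j /andP[fj _]]]; move/andP: mx => [/set0Pn[x]].
      rewrite inE => /andP[xf xA]; move: (subsetP fj x xf); rewrite inB inA in xA *.
      by move=> /andP[kx _]; move: (leq_trans xA kx); rewrite ltnn.
    by [].
  by rewrite add0n; congr nat_of_bool; apply: eq_existsb => j; rewrite /inb cf andbT.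
have hB : \sum_(j : 'I_p) \sum_f (inb j f : nat) = p.-1 * 'C(k, r) + 'C(q, r).
  rewrite (eq_bigr (fun j : 'I_p => 'C(#|B j|, r))); last first.
    by move=> j _; rewrite -cards_draws card_sum.
  case: p npq ppos (cardBj) => // p' _ _ cB; rewrite big_ord_recr /= cB /= ltnn.
  rewrite (eq_bigr (fun _ => 'C(k, r))); last by move=> j _; rewrite cB /= ltnS ltn_ord.
  by rewrite sum_nat_const card_ord.
have hR : 'C(n, r) = \sum_f (mix f : nat) + 'C(k, r) + 'C(n - k, r).
  have cCA : #|~: A| = n - k by have h := cardsC A; rewrite card_ord cardA in h; lia.
  have e1 : 'C(n, r) = \sum_(f : {set 'I_n}) ((#|f| == r) : nat) by rewrite -card_sum card_draws card_ord.
  have e2 : 'C(k, r) = \sum_(f : {set 'I_n}) ((f \subset A) && (#|f| == r) : nat) by rewrite -card_sum cards_draws cardA.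
  have e3 : 'C(n - k, r) = \sum_(f : {set 'I_n}) ((f \subset ~: A) && (#|f| == r) : nat) by rewrite -card_sum cards_draws cCA.
  rewrite e1 e2 e3 -!big_split /=.
  apply: eq_bigr => f _; rewrite /mix.
  case cf: (#|f| == r); rewrite ?andbF //= !andbT.
  rewrite setI_eq0 setD_eq0 disjoints_subset.
  case fA: (f \subset A); case fC: (f \subset ~: A) => //=.
  have : f == set0 by rewrite (eq0_subset A) fA fC.
  by rewrite (negbTE (nz f cf)).
rewrite hE1 hB hR; lia.
Qed.

End HUsec.

Unset Implicit Arguments.
Import GRing.Theory Num.Theory.

Theorem lemma4p1 (n k r p q : nat) :
  2 <= k -> 2 <= r -> 2 * k <= n -> n = p * k + q -> 1 <= q <= k ->
  vertex_k_maximal r k (HU n k r p) /\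
  ((#|hE (HU n k r p)|%:R : rat) <=
     'C(n, r)%:R - 'C(n - k, r)%:R + (n%:R / k%:R - 2) * 'C(k, r)%:R)%R /\
  ((k %| n) -> (#|hE (HU n k r p)|%:R : rat) =
     ('C(n, r)%:R - 'C(n - k, r)%:R + (n%:R / k%:R - 2) * 'C(k, r)%:R)%R).
Proof.
move=> k2 r2 nk npq /andP[q1 qk].
split.
  split; [exact: HU_hyper r2 | exact: HU_unif | exact: HU_kappabar_le k2 r2 nk npq q1 qk |].
  move=> e he. exact: (HU_lower k2 r2 nk npq q1 qk he).
have hc := HU_count k2 r2 nk npq q1 qk.
set N := #|hE (HU n k r p)| in hc *.
have pp : (0 < p)%N by move: nk qk k2; rewrite npq; case: (p) => [|//]; lia.
have kp : (0 < k)%N by apply: leq_trans k2.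
have k0 : ((k%:R : rat) != 0)%R by rewrite pnatr_eq0 -lt0n.
have hN : ((N%:R : rat) = 'C(n, r)%:R - 'C(n - k, r)%:R + (p%:R - 2) * 'C(k, r)%:R + 'C(q, r)%:R)%R.
  have := congr1 (fun x => (x%:R : rat)%R) hc; rewrite /= !natrD natrM -subn1 natrB // => h.
  apply: (addIr ('C(k, r)%:R + 'C(n - k, r)%:R)%R); rewrite addrA h; ring.
have hn : ((n%:R / k%:R : rat) = p%:R + q%:R / k%:R)%R.
  by rewrite npq natrD natrM mulrDl mulfK.
have hq : (('C(q, r)%:R : rat) <= q%:R / k%:R * 'C(k, r)%:R)%R.
  rewrite mulrAC ler_pdivlMr ?ltr0n // -!natrM ler_nat [_ * k]mulnC; apply: bin_ratio qk _; exact: leq_trans r2.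
rewrite hN hn; split.
  have e : (('C(n, r)%:R - 'C(n - k, r)%:R + (p%:R + q%:R / k%:R - 2) * 'C(k, r)%:R : rat)
     = 'C(n, r)%:R - 'C(n - k, r)%:R + (p%:R - 2) * 'C(k, r)%:R + q%:R / k%:R * 'C(k, r)%:R)%R by ring.
  rewrite e; lra.
move=> kn; have qk' : q = k.
  apply/eqP; rewrite eqn_leq qk /=; apply: dvdn_leq => //.
  by rewrite -(dvdn_addr _ (dvdn_mull p (dvdnn k))) -npq.
rewrite qk' divff //; ring.
Qed.
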